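(* Let $a$ and $c$ be coprime positive odd integers. Then for every integer $p\geq1$ and all $x,z\in\mathbb{R}$, $$ac^{p}S^{(5)}_{p}(a,c:x,z)+ca^{p}S^{(5)}_{p}(c,a:z,x)=-\frac{1}{2}\sum_{j=1}^{p}\binom{p-1}{j-1}a^{p+1-j}c^{j}\mathcal{E}_{p-j}(z)\mathcal{E}_{j-1}(x)+\mathcal{E}_{p}(az+cx).$$
   Context: $B_n(x)$ is the $n$th Bernoulli polynomial ($\frac{te^{xt}}{e^t-1}=\sum B_n(x)\frac{t^n}{n!}$) and $\mathcal{B}_n(x)=B_n(x-[x])$ the $n$th Bernoulli function ($[x]$ the largest integer $\le x$). $E_n(x)$ is the $n$th Euler polynomial ($\frac{2e^{xt}}{e^t+1}=\sum E_n(x)\frac{t^n}{n!}$), and the Euler function $\mathcal{E}_n$ ($n\ge0$) is defined by $\mathcal{E}_n(x)=E_n(x)$ for $0\le x<1$ and $\mathcal{E}_n(x+m)=(-1)^m\mathcal{E}_n(x)$ for $m\in\mathbb{Z}$. For positive integers $a,c$, an integer $p\ge1$ and real $x,z$, define $$S^{(5)}_{p}(a,c:x,z)=\sum_{\mu=0}^{c-1}(-1)^{\mu}\mathcal{E}_{p-1}\Big(a\frac{\mu+z}{c}+x\Big)\mathcal{B}_{1}\Big(\frac{\mu+z}{c}\Big).$$ *)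

(* Defs.v *)
From mathcomp Require Import all_boot all_order all_algebra.
From mathcomp Require Import reals.
Set Implicit Arguments. Unset Strict Implicit. Unset Printing Implicit Defensive.
Import Order.TTheory GRing.Theory Num.Theory.
Local Open Scope ring_scope.

Section Defs.
Variable R : realType.

(* Euler polynomials, from  2 e^{xt} = (e^t + 1) sum_n E_n(x) t^n/n!  by
   comparing the coefficients of t^n/n!:
     2 x^n = sum_{k=0}^{n} C(n,k) E_k(x) + E_n(x),
   i.e.  E_n(x) = x^n - 1/2 sum_{k<n} C(n,k) E_k(x).
   eulerL n x = [:: E_0(x); ...; E_n(x)]. *)
Fixpoint eulerL (n : nat) (x : R) : seq R :=
  match n with
  | 0 => [:: 1]
  | m.+1 => let s := eulerL m x in
      rcons s (x ^+ m.+1 - 2^-1 * \sum_(k < m.+1) ('C(m.+1, k))%:R * nth 0 s k)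
  end.
Definition eulerP (n : nat) (x : R) : R := nth 0 (eulerL n x) n.

(* Bernoulli polynomials, from  t e^{xt} = (e^t - 1) sum_n B_n(x) t^n/n!  by
   comparing the coefficients of t^{n+1}/(n+1)!:
     (n+1) x^n = sum_{k=0}^{n} C(n+1,k) B_k(x),
   i.e.  B_n(x) = x^n - 1/(n+1) sum_{k<n} C(n+1,k) B_k(x). *)
Fixpoint bernL (n : nat) (x : R) : seq R :=
  match n with
  | 0 => [:: 1]
  | m.+1 => let s := bernL m x in
      rcons s (x ^+ m.+1 - (m.+2%:R)^-1 *
                 \sum_(k < m.+1) ('C(m.+2, k))%:R * nth 0 s k)
  end.
Definition bernP (n : nat) (x : R) : R := nth 0 (bernL n x) n.

Definition fracR (x : R) : R := x - (Num.floor x)%:~R.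

Definition bernF (n : nat) (x : R) : R := bernP n (fracR x).

(* Euler function: \mathcal{E}_n(x) = E_n(x) on [0,1), \mathcal{E}_n(x+m) = (-1)^m \mathcal{E}_n(x);
   equivalently \mathcal{E}_n(x) = (-1)^[x] E_n(x - [x]). *)
Definition eulerF (n : nat) (x : R) : R :=
  (-1) ^ (Num.floor x) * eulerP n (fracR x).

Definition S5 (p a c : nat) (x z : R) : R :=
  \sum_(mu < c) (-1) ^+ mu * eulerF p.-1 (a%:R * ((mu%:R + z) / c%:R) + x)
                 * bernF 1 ((mu%:R + z) / c%:R).

End Defs.

(* Main.v *)
Require Import Defs.
From mathcomp Require Import all_boot all_order all_algebra.
From mathcomp Require Import reals ring lra zify.
Import Order.TTheory GRing.Theory Num.Theory.
Local Open Scope ring_scope.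

Section S.
Variable R : realType.
Implicit Types (x u v y w : R).

Lemma size_eulerL n x : size (eulerL n x) = n.+1.
Proof. by elim: n => //= n IH; rewrite size_rcons IH. Qed.

Lemma nth_eulerL n x k : (k <= n)%N -> nth 0 (eulerL n x) k = eulerP k x.
Proof.
elim: n k => [|n IH] k; first by rewrite leqn0 => /eqP ->.
rewrite leq_eqVlt => /orP [/eqP -> //|]; rewrite ltnS => hk.
by rewrite /= nth_rcons size_eulerL ltnS hk IH.
Qed.

Lemma eulerPS n x : eulerP n.+1 x =
  x ^+ n.+1 - 2^-1 * \sum_(k < n.+1) ('C(n.+1, k))%:R * eulerP k x.
Proof.
rewrite /eulerP /= nth_rcons size_eulerL ltnn eqxx; congr (_ - _ * _).
by apply: eq_bigr => k _; rewrite nth_eulerL // -ltnS.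
Qed.

Lemma eulerP0 x : eulerP 0 x = 1. Proof. by []. Qed.

Lemma eulerP_shift n x : eulerP n (x + 1) = 2 * x ^+ n - eulerP n x.
Proof.
elim/ltn_ind: n => [[|n] IH]; first by rewrite !eulerP0 expr0; ring.
rewrite !eulerPS.
rewrite (eq_bigr (fun k : 'I_n.+1 => 2 * (('C(n.+1, k))%:R * x ^+ k)
             - ('C(n.+1, k))%:R * eulerP k x)); last first.
  by move=> k _; rewrite IH //; ring.
rewrite sumrB exprD1n big_ord_recr /= binn mulr1n.
rewrite (eq_bigr (fun k : 'I_n.+1 => ('C(n.+1, k))%:R * x ^+ k)); last first.
  by move=> k _; rewrite mulr_natl.
rewrite -mulr_sumr.
by field.
Qed.

Definition ispoly (f : R -> R) := exists P : {poly R}, forall u, f u = P.[u].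

Lemma ispoly_ext f g : (forall u, f u = g u) -> ispoly g -> ispoly f.
Proof. by move=> e [P hP]; exists P => u; rewrite e hP. Qed.
Arguments ispoly_ext {f g}.
Lemma ispolyC k : ispoly (fun _ => k).
Proof. by exists k%:P => u; rewrite hornerC. Qed.
Lemma ispolyX : ispoly (fun u => u).
Proof. by exists 'X => u; rewrite hornerX. Qed.
Lemma ispolyD f g : ispoly f -> ispoly g -> ispoly (fun u => f u + g u).
Proof. by move=> [P hP] [Q hQ]; exists (P + Q) => u; rewrite hornerD hP hQ. Qed.
Lemma ispolyN f : ispoly f -> ispoly (fun u => - f u).
Proof. by move=> [P hP]; exists (- P) => u; rewrite hornerN hP. Qed.
Lemma ispolyB f g : ispoly f -> ispoly g -> ispoly (fun u => f u - g u).
Proof. by move=> hf hg; apply: ispolyD => //; apply: ispolyN. Qed.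
Lemma ispolyM f g : ispoly f -> ispoly g -> ispoly (fun u => f u * g u).
Proof. by move=> [P hP] [Q hQ]; exists (P * Q) => u; rewrite hornerM hP hQ. Qed.
Lemma ispolyXn f n : ispoly f -> ispoly (fun u => f u ^+ n).
Proof. by move=> [P hP]; exists (P ^+ n) => u; rewrite horner_exp hP. Qed.
Lemma ispoly_comp f g : ispoly f -> ispoly g -> ispoly (fun u => f (g u)).
Proof. by move=> [P hP] [Q hQ]; exists (P \Po Q) => u; rewrite horner_comp hP hQ. Qed.
Lemma ispoly_sum n {F : nat -> R -> R} :
  (forall i, (i < n)%N -> ispoly (F i)) -> ispoly (fun u => \sum_(i < n) F i u).
Proof.
elim: n => [|n IH] h.
  by apply: (ispoly_ext (g := fun _ => 0)); [move=> u; rewrite big_ord0|apply: ispolyC].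
apply: (ispoly_ext (g := fun u => \sum_(i < n) F i u + F n u)).
  by move=> u; rewrite big_ord_recr.
apply: ispolyD; last exact: h.
by apply: IH => i hi; apply: h; rewrite ltnS ltnW.
Qed.

Lemma ispoly_eulerP n : ispoly (eulerP n).
Proof.
elim/ltn_ind: n => [[|n] IH]; first by apply: (ispoly_ext (g := fun _ => 1)) => //; apply: ispolyC.
apply: (ispoly_ext (g := fun u => u ^+ n.+1 - 2^-1 *
   \sum_(k < n.+1) ('C(n.+1, k))%:R * eulerP k u)); first by move=> u; rewrite eulerPS.
apply: ispolyB; first by apply: ispolyXn; apply: ispolyX.
apply: ispolyM; first exact: ispolyC.
apply: (@ispoly_sum n.+1 (fun k u => ('C(n.+1, k))%:R * eulerP k u)) => i hi.
by apply: ispolyM; [apply: ispolyC| apply: IH].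
Qed.

Lemma antiper_poly0 (P : {poly R}) : (forall u, P.[u + 1] + P.[u] = 0) -> P = 0.
Proof.
move=> h.
have h2 u : P.[u + 2] = P.[u].
  have e1 := h (u + 1); have e2 := h u.
  have -> : u + 2 = u + 1 + 1 by ring.
  by apply/eqP; rewrite -subr_eq0; apply/eqP; lra.
have hk k : P.[(2 * k)%:R] = P.[0].
  elim: k => [|k IH]; first by rewrite muln0.
  by rewrite mulnS natrD addrC h2.
set Q := P - P.[0]%:P.
have hQ : Q = 0.
  apply/eqP/negPn/negP => nz.
  pose rs := [seq ((2 * k)%:R : R) | k <- iota 0 (size Q)].
  have H1 : all (root Q) rs.
    by apply/allP => r /mapP [k _ ->]; rewrite /root /Q hornerD hornerN hornerC hk subrr.
  have H2 : uniq rs.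
    rewrite map_inj_uniq ?iota_uniq // => i j /eqP; rewrite eqr_nat => /eqP.
    by move=> e; apply/eqP; rewrite -(eqn_pmul2l (isT : (0 < 2)%N)) e.
  by have := max_poly_roots nz H1 H2; rewrite size_map size_iota ltnn.
have eP : P = P.[0]%:P by apply/eqP; rewrite -subr_eq0 -/Q hQ.
have := h 0; rewrite eP !hornerC => e.
have : P.[0] = 0 by lra.
by rewrite eP => ->.
Qed.

Lemma antiper_ispoly0 f : ispoly f -> (forall u, f (u + 1) + f u = 0) -> forall u, f u = 0.
Proof.
move=> [P hP] h u; rewrite hP (@antiper_poly0 P) ?horner0 //.
by move=> v; rewrite -!hP.
Qed.


Lemma fracR_int u (z : int) : fracR (u + z%:~R) = fracR u.
Proof. by rewrite /fracR floorDrz ?intr_int // intrKfloor intrD; ring. Qed.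

Lemma eulerF_int n u (z : int) : eulerF n (u + z%:~R) = (-1) ^ z * eulerF n u.
Proof.
rewrite /eulerF fracR_int floorDrz ?intr_int // intrKfloor expfzDr ?oppr_eq0 ?oner_eq0 //.
by rewrite mulrAC mulrC mulrA.
Qed.

Lemma eulerF_nat n u k : eulerF n (u + k%:R) = (-1) ^+ k * eulerF n u.
Proof. exact: (eulerF_int n u k). Qed.

Lemma eulerF1 n u : eulerF n (u + 1) = - eulerF n u.
Proof. by have := eulerF_nat n u 1; rewrite expr1 mulN1r. Qed.

Lemma floor01 u : 0 <= u < 1 -> Num.floor u = 0.
Proof. by move=> h; apply: floor_def; rewrite add0r. Qed.

Lemma eulerF01 n u : 0 <= u < 1 -> eulerF n u = eulerP n u.
Proof. by move=> h; rewrite /eulerF /fracR floor01 // expr0z mul1r subr0. Qed.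

Lemma eulerF12 n u : 1 <= u < 2 -> eulerF n u = - eulerP n (u - 1).
Proof.
move=> /andP [h1 h2].
have -> : u = (u - 1) + 1 by ring.
by rewrite eulerF1 eulerF01 ?addrK //; apply/andP; split; lra.
Qed.

Lemma bernF_1 n (t : R) : bernF n (t + 1) = bernF n t.
Proof. by rewrite /bernF (fracR_int t 1). Qed.

Lemma bernF1_01 (t : R) : 0 <= t < 1 -> bernF 1 t = t - 2^-1.
Proof.
move=> h; rewrite /bernF /fracR floor01 // subr0 /bernP /= big_ord1 /= expr1.
by rewrite bin0 mulr1 mulr1.
Qed.

Lemma zero_ext (f : R -> R) : (forall u, f (u + 1) = - f u) ->
  (forall u, 0 <= u < 1 -> f u = 0) -> forall u, f u = 0.
Proof.
move=> h h0.
have hn k : forall u, f (u + k%:R) = (-1) ^+ k * f u.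
  elim: k => [|k IH] u; first by rewrite addr0 expr0 mul1r.
  by rewrite -natr1 addrA h IH exprS; ring.
move=> u; have := floor_itv u; have hfr : fracR u = u - (Num.floor u)%:~R by [].
move: hfr; case: (Num.floor u) => k hfr hi.
  have hu : u = fracR u + k%:R by rewrite hfr; ring.
  rewrite hu hn h0 ?mulr0 //; rewrite hfr; move: hi; rewrite intrD /=.
  by move=> /andP [h1 h2]; apply/andP; split; lra.
have : f (fracR u) = 0.
  apply: h0; rewrite hfr; move: hi; rewrite intrD NegzE /=.
  by move=> /andP [h1 h2]; apply/andP; split; lra.
have -> : fracR u = u + k.+1%:R by rewrite hfr NegzE mulrNz; ring.
by rewrite hn => /eqP; rewrite mulf_eq0 signr_eq0 /= => /eqP.
Qed.

Lemma altS m (F : nat -> R) : odd m ->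
  \sum_(k < m) (-1) ^+ k * F k.+1 = - (\sum_(k < m) (-1) ^+ k * F k) + F 0%N + F m.
Proof.
move=> om.
have e : \sum_(k < m.+1) (-1) ^+ k * F k = (-1) ^+ 0 * F 0%N +
   \sum_(i < m) (-1) ^+ (lift ord0 i) * F (lift ord0 i) by rewrite big_ord_recl.
rewrite big_ord_recr /= in e.
have e2 : \sum_(i < m) (-1) ^+ (lift ord0 i) * F (lift ord0 i)
        = - \sum_(k < m) (-1) ^+ k * F k.+1.
  by rewrite -sumrN; apply: eq_bigr => i _; rewrite lift0 exprS; ring.
rewrite e2 -signr_odd om expr0 expr1 in e.
have e3 : (-1) ^+ 0 * F 0%N = F 0%N by rewrite expr0 mul1r.
rewrite e3 in e; lra.
Qed.


Lemma ispoly_lin (k m : R) : ispoly (fun u => (u + k) / m).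
Proof. by apply: ispolyM; [apply: ispolyD; [apply: ispolyX|apply: ispolyC]|apply: ispolyC]. Qed.

Lemma ispoly_shift (k : R) : ispoly (fun u => u + k).
Proof. by apply: ispolyD; [apply: ispolyX|apply: ispolyC]. Qed.

Lemma ispoly_Eshift n (k : R) : ispoly (fun u => eulerP n (u + k)).
Proof. exact: (@ispoly_comp (eulerP n) (fun u => u + k) (ispoly_eulerP n) (ispoly_shift k)). Qed.

Lemma mult_eulerP m n u : odd m ->
  eulerP n u = m%:R ^+ n * \sum_(k < m) (-1) ^+ k * eulerP n ((u + k%:R) / m%:R).
Proof.
move=> om.
have m0 : (m%:R : R) != 0 by rewrite pnatr_eq0; case: m om.
set f := fun u => eulerP n u - m%:R ^+ n * \sum_(k < m) (-1) ^+ k * eulerP n ((u + k%:R) / m%:R).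
suff : f u = 0 by rewrite /f => /eqP; rewrite subr_eq0 => /eqP.
apply: antiper_ispoly0 => [|v].
  apply: ispolyB; first exact: ispoly_eulerP.
  apply: ispolyM; first exact: ispolyC.
  apply: (@ispoly_sum m (fun k u => (-1) ^+ k * eulerP n ((u + k%:R) / m%:R))) => i _.
  apply: ispolyM; first exact: ispolyC.
  exact: (@ispoly_comp (eulerP n) (fun u => (u + i%:R) / m%:R) (ispoly_eulerP n) (ispoly_lin _ _)).
rewrite /f.
have e1 : \sum_(k < m) (-1) ^+ k * eulerP n ((v + 1 + k%:R) / m%:R)
   = \sum_(k < m) (-1) ^+ k * (fun j => eulerP n ((v + j%:R) / m%:R)) k.+1.
  by apply: eq_bigr => k _ /=; rewrite -natr1; congr (_ * eulerP n (_ / _)); ring.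
rewrite e1 (altS m (fun j => eulerP n ((v + j%:R) / m%:R))) //= eulerP_shift addr0.
have -> : (v + m%:R) / m%:R = v / m%:R + 1 by field.
rewrite eulerP_shift expr_div_n.
set S := \sum_(k < m) _; field; exact: expf_neq0.
Qed.

Lemma mult_eulerF m n u : odd m ->
  eulerF n u = m%:R ^+ n * \sum_(k < m) (-1) ^+ k * eulerF n ((u + k%:R) / m%:R).
Proof.
move=> om.
have mpos : (0 < m)%N by move: om; case: m.
have m0 : (m%:R : R) != 0 by rewrite pnatr_eq0 -lt0n.
have mge : (0 : R) < m%:R by rewrite ltr0n.
set f := fun u => eulerF n u - m%:R ^+ n * \sum_(k < m) (-1) ^+ k * eulerF n ((u + k%:R) / m%:R).
suff : f u = 0 by rewrite /f => /eqP; rewrite subr_eq0 => /eqP.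
apply: zero_ext => [v|v hv].
  rewrite /f.
  have e1 : \sum_(k < m) (-1) ^+ k * eulerF n ((v + 1 + k%:R) / m%:R)
     = \sum_(k < m) (-1) ^+ k * (fun j => eulerF n ((v + j%:R) / m%:R)) k.+1.
    by apply: eq_bigr => k _ /=; rewrite -natr1; congr (_ * eulerF n (_ / _)); ring.
  rewrite e1 (altS m (fun j => eulerF n ((v + j%:R) / m%:R))) //= eulerF1 addr0.
  have -> : (v + m%:R) / m%:R = v / m%:R + 1 by field.
  rewrite eulerF1; set S := \sum_(k < m) _; ring.
rewrite /f eulerF01 // (mult_eulerP m n v om); apply/eqP; rewrite subr_eq0; apply/eqP.
congr (_ * _); apply: eq_bigr => k _; rewrite eulerF01 //.
have hk : (k%:R : R) + 1 <= m%:R by rewrite natr1 ler_nat.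
have k0 : (0:R) <= k%:R by rewrite ler0n.
move/andP: hv => [h1 h2].
apply/andP; split.
  by apply: divr_ge0; [lra| exact: ltW].
by rewrite ltr_pdivrMr // mul1r; lra.
Qed.


Lemma perm_eulerF a c n u : odd a -> odd c -> coprime a c ->
  \sum_(mu < c) (-1) ^+ mu * eulerF n ((u + a%:R * mu%:R) / c%:R) =
  \sum_(mu < c) (-1) ^+ mu * eulerF n ((u + mu%:R) / c%:R).
Proof.
move=> oa oc cop.
have cpos : (0 < c)%N by move: oc; case: c {cop}.
have c0 : (c%:R : R) != 0 by rewrite pnatr_eq0 -lt0n.
pose h (i : 'I_c) : 'I_c := Ordinal (ltn_pmod (a * i) cpos).
have hinj : injective h.
  move=> i j /(congr1 val) /= e; apply/val_inj => /=.
  wlog le : i j e / (i <= j)%N.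
    move=> W; case/orP: (leq_total i j) => hl; [exact: W| by apply/esym/W].
  have hd : (c %| j - i)%N.
    rewrite -(@Gauss_dvdr c a); last by rewrite coprime_sym.
    by rewrite mulnBr -eqn_mod_dvd ?leq_mul2l ?le ?orbT // e.
  have lt : (j - i < c)%N by apply: leq_ltn_trans (leq_subr i j) (ltn_ord j).
  case: (posnP (j - i)) => [/eqP|pos]; first by rewrite subn_eq0 => h2; apply/eqP; rewrite eqn_leq le h2.
  by have := dvdn_leq pos hd; lia.
rewrite [RHS](reindex_inj hinj); apply: eq_bigr => mu _ /=.
set q := (a * mu %/ c)%N; set r := (a * mu %% c)%N.
have e : (a%:R * mu%:R : R) = r%:R + q%:R * c%:R.
  by rewrite -!natrM -natrD addnC -divn_eq.
have -> : (u + a%:R * mu%:R) / c%:R = (u + r%:R) / c%:R + q%:R by rewrite e; field.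
rewrite eulerF_nat mulrA -exprD.
have ho : odd mu = odd q (+) odd r.
  by have := congr1 odd (divn_eq (a * mu) c); rewrite -/q -/r oddM oa /= oddD oddM oc andbT.
congr (_ * _); rewrite -signr_odd -[(-1) ^+ r]signr_odd oddD ho.
by case: (odd q); case: (odd r).
Qed.

Lemma appell n v y : eulerP n (v + y) =
  \sum_(k < n.+1) ('C(n, k))%:R * y ^+ (n - k) * eulerP k v.
Proof.
set f := fun v => \sum_(k < n.+1) ('C(n, k))%:R * y ^+ (n - k) * eulerP k v - eulerP n (v + y).
suff : f v = 0 by rewrite /f => /eqP; rewrite subr_eq0 => /eqP ->.
apply: antiper_ispoly0 => [|w].
  apply: ispolyB.
    apply: (@ispoly_sum n.+1 (fun k v => ('C(n, k))%:R * y ^+ (n - k) * eulerP k v)) => i _.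
    by apply: ispolyM; [apply: ispolyC| apply: ispoly_eulerP].
  exact: ispoly_Eshift.
rewrite /f.
have -> : w + 1 + y = (w + y) + 1 by ring.
rewrite eulerP_shift.
have -> : \sum_(k < n.+1) ('C(n, k))%:R * y ^+ (n - k) * eulerP k (w + 1) =
   2 * (\sum_(k < n.+1) ('C(n, k))%:R * y ^+ (n - k) * w ^+ k)
   - \sum_(k < n.+1) ('C(n, k))%:R * y ^+ (n - k) * eulerP k w.
  by rewrite mulr_sumr -sumrB; apply: eq_bigr => k _; rewrite eulerP_shift; ring.
have -> : \sum_(k < n.+1) ('C(n, k))%:R * y ^+ (n - k) * w ^+ k = (w + y) ^+ n.
  by rewrite addrC exprDn; apply: eq_bigr => k _; rewrite mulr_natl -mulrnAl.
set S := \sum_(k < n.+1) _; set T := eulerP n _; lra.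
Qed.

Lemma conv n y v :
  \sum_(k < n.+1) ('C(n, k))%:R * eulerP (n - k) y * eulerP k v =
  2 * (1 - (y + v)) * eulerP n (y + v) + 2 * eulerP n.+1 (y + v).
Proof.
set f := fun y => \sum_(k < n.+1) ('C(n, k))%:R * eulerP (n - k) y * eulerP k v -
  (2 * (1 - (y + v)) * eulerP n (y + v) + 2 * eulerP n.+1 (y + v)).
suff : f y = 0 by rewrite /f => /eqP; rewrite subr_eq0 => /eqP ->.
have hc k : ispoly (fun y => eulerP k (y + v)).
  exact: ispoly_Eshift.
apply: antiper_ispoly0 => [|w].
  apply: ispolyB.
    apply: (@ispoly_sum n.+1 (fun k y => ('C(n, k))%:R * eulerP (n - k) y * eulerP k v)) => i _.
    by apply: ispolyM; [apply: ispolyM; [apply: ispolyC| apply: ispoly_eulerP]| apply: ispolyC].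
  apply: ispolyD; last by apply: ispolyM; [apply: ispolyC| apply: hc].
  apply: ispolyM; last exact: hc.
  by apply: ispolyM; [apply: ispolyC| apply: ispolyB; [apply: ispolyC| apply: ispolyD; [apply: ispolyX| apply: ispolyC]]].
rewrite /f.
have -> : w + 1 + v = (w + v) + 1 by ring.
rewrite !eulerP_shift.
have -> : \sum_(k < n.+1) ('C(n, k))%:R * eulerP (n - k) (w + 1) * eulerP k v =
   2 * (\sum_(k < n.+1) ('C(n, k))%:R * w ^+ (n - k) * eulerP k v)
   - \sum_(k < n.+1) ('C(n, k))%:R * eulerP (n - k) w * eulerP k v.
  by rewrite mulr_sumr -sumrB; apply: eq_bigr => k _; rewrite eulerP_shift; ring.
rewrite -appell [v + w]addrC exprS.
ring.
Qed.


Lemma S5_shift_x p a c x z : S5 p a c (x + 1) z = - S5 p a c x z.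
Proof.
rewrite /S5 -sumrN; apply: eq_bigr => mu _.
by rewrite addrA eulerF1; ring.
Qed.

Lemma S5_shift_z p a c x z : odd a -> odd c -> S5 p a c x (z + 1) = - S5 p a c x z.
Proof.
move=> oa oc.
have cpos : (0 < c)%N by move: oc; case: c.
have c0 : (c%:R : R) != 0 by rewrite pnatr_eq0 -lt0n.
pose g := fun k : nat => eulerF p.-1 (a%:R * ((k%:R + z) / c%:R) + x) * bernF 1 ((k%:R + z) / c%:R).
have e1 : S5 p a c x (z + 1) = \sum_(mu < c) (-1) ^+ mu * g mu.+1.
  rewrite /S5; apply: eq_bigr => mu _; rewrite /g -mulrA.
  by have -> : mu%:R + (z + 1) = mu.+1%:R + z by rewrite -natr1; ring.
have e2 : S5 p a c x z = \sum_(mu < c) (-1) ^+ mu * g mu.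
  by rewrite /S5; apply: eq_bigr => mu _; rewrite /g -mulrA.
rewrite e1 e2 (altS c g) //.
suff -> : g c = - g 0%N by ring.
rewrite /g.
have -> : (c%:R + z) / c%:R = (0%:R + z) / c%:R + 1 by field.
have -> : a%:R * ((0 + z) / c%:R + 1) + x = (a%:R * ((0 + z) / c%:R) + x) + a%:R by ring.
rewrite bernF_1 eulerF_nat -signr_odd oa expr1; ring.
Qed.

Lemma S5_expand n a c x z : odd a -> (0 < c)%N -> 0 <= z < 1 ->
  S5 n.+1 a c x z = a%:R ^+ n * \sum_(mu < c) \sum_(nu < a)
    (-1) ^+ mu * (-1) ^+ nu * eulerF n ((mu%:R + z) / c%:R + (nu%:R + x) / a%:R)
      * ((mu%:R + z) / c%:R - 2^-1).
Proof.
move=> oa cpos hz.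
have apos : (0 < a)%N by move: oa; case: a.
have a0 : (a%:R : R) != 0 by rewrite pnatr_eq0 -lt0n.
have c0 : (c%:R : R) != 0 by rewrite pnatr_eq0 -lt0n.
have cge : (0 : R) < c%:R by rewrite ltr0n.
rewrite /S5 mulr_sumr; apply: eq_bigr => mu _.
have hy : 0 <= (mu%:R + z) / c%:R < 1.
  have hk : (mu%:R : R) + 1 <= c%:R by rewrite natr1 ler_nat.
  have k0 : (0:R) <= mu%:R by rewrite ler0n.
  move/andP: hz => [h1 h2]; apply/andP; split.
    by apply: divr_ge0; [lra| exact: ltW].
  by rewrite ltr_pdivrMr // mul1r; lra.
rewrite bernF1_01 // (mult_eulerF a n _ oa) /=.
rewrite !mulr_sumr mulr_suml; apply: eq_bigr => nu _.
have -> : (a%:R * ((mu%:R + z) / c%:R) + x + nu%:R) / a%:R =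
   (mu%:R + z) / c%:R + (nu%:R + x) / a%:R by field; apply/andP.
ring.
Qed.

Lemma termwise n y v : 0 <= y < 1 -> 0 <= v < 1 ->
  eulerF n (y + v) * (y - 2^-1) + eulerF n (y + v) * (v - 2^-1) =
  - 2^-1 * (\sum_(k < n.+1) ('C(n, k))%:R * eulerP (n - k) y * eulerP k v)
  + eulerF n.+1 (y + v).
Proof.
move=> /andP [y0 y1] /andP [v0 v1].
rewrite conv.
have [hw|hw] := ltP (y + v) 1.
  rewrite !eulerF01 ?hw ?andbT; try (apply: addr_ge0 => //).
  by field.
set t := y + v - 1.
have ew : y + v = t + 1 by rewrite /t; ring.
have ht : 0 <= t < 1 by apply/andP; split; rewrite /t; lra.
rewrite ew !eulerF1 !eulerF01 // !eulerP_shift exprS.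
rewrite -mulrDr (_ : y - 2^-1 + (v - 2^-1) = t); last by rewrite /t; field.
by field.
Qed.


Lemma in01 (m k : nat) (z : R) : (k < m)%N -> 0 <= z < 1 -> 0 <= (k%:R + z) / m%:R < 1.
Proof.
move=> km hz.
have mge : (0 : R) < m%:R by rewrite ltr0n; apply: leq_ltn_trans km.
have hk : (k%:R : R) + 1 <= m%:R by rewrite natr1 ler_nat.
have k0 : (0:R) <= k%:R by rewrite ler0n.
move/andP: hz => [h1 h2]; apply/andP; split.
  by apply: divr_ge0; [lra| exact: ltW].
by rewrite ltr_pdivrMr // mul1r; lra.
Qed.

Lemma mult_eulerF01 m n (z : R) : odd m -> 0 <= z < 1 ->
  eulerF n z = m%:R ^+ n * \sum_(k < m) (-1) ^+ k * eulerP n ((k%:R + z) / m%:R).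
Proof.
move=> om hz; rewrite (mult_eulerF m n z om); congr (_ * _).
by apply: eq_bigr => k _; rewrite addrC eulerF01 // in01.
Qed.

Lemma RHS_expand n a c (x z : R) : odd a -> odd c -> 0 <= x < 1 -> 0 <= z < 1 ->
  \sum_(1 <= j < n.+2) ('C(n, j.-1))%:R * a%:R ^+ (n.+2 - j) * c%:R ^+ j
     * eulerF (n.+1 - j) z * eulerF j.-1 x
  = a%:R ^+ n.+1 * c%:R ^+ n.+1 * \sum_(mu < c) \sum_(nu < a)
     ((-1) ^+ mu * (-1) ^+ nu * \sum_(k < n.+1) ('C(n, k))%:R *
        eulerP (n - k) ((mu%:R + z) / c%:R) * eulerP k ((nu%:R + x) / a%:R)).
Proof.
move=> oa oc hx hz.
rewrite big_add1 /= big_mkord.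
set K := a%:R ^+ n.+1 * c%:R ^+ n.+1.
transitivity (\sum_(k < n.+1) K * \sum_(mu < c) \sum_(nu < a)
     ((-1) ^+ mu * (-1) ^+ nu * (('C(n, k))%:R *
        eulerP (n - k) ((mu%:R + z) / c%:R) * eulerP k ((nu%:R + x) / a%:R)))); last first.
  rewrite -mulr_sumr; congr (_ * _).
  rewrite exchange_big /=; apply: eq_bigr => mu _.
  rewrite exchange_big /=; apply: eq_bigr => nu _.
  by rewrite mulr_sumr.
apply: eq_bigr => k _.
have kn : (k <= n)%N by rewrite -ltnS.
rewrite subSS (mult_eulerF01 c (n - k) z oc hz) (mult_eulerF01 a k x oa hx).
have ea : a%:R ^+ (n.+1 - k) * a%:R ^+ k = a%:R ^+ n.+1 :> R.
  by rewrite -exprD subnK // ltnW.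
have ec : c%:R ^+ k.+1 * c%:R ^+ (n - k) = c%:R ^+ n.+1 :> R.
  by rewrite -exprD addSn subnKC.
rewrite /K -ea -ec.
set A := \sum_(i < c) (-1) ^+ i * _; set B := \sum_(i < a) (-1) ^+ i * _.
have -> : \sum_(mu < c) \sum_(nu < a)
     ((-1) ^+ mu * (-1) ^+ nu * (('C(n, k))%:R *
        eulerP (n - k) ((mu%:R + z) / c%:R) * eulerP k ((nu%:R + x) / a%:R)))
   = ('C(n, k))%:R * (A * B).
  rewrite mulr_suml mulr_sumr; apply: eq_bigr => mu _.
  rewrite mulr_sumr mulr_sumr; apply: eq_bigr => nu _; ring.
ring.
Qed.

Lemma Ep_expand n a c (x z : R) : odd a -> odd c -> coprime a c ->
  eulerF n (a%:R * z + c%:R * x) = a%:R ^+ n * c%:R ^+ n *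
   \sum_(mu < c) \sum_(nu < a) ((-1) ^+ mu * (-1) ^+ nu *
      eulerF n ((mu%:R + z) / c%:R + (nu%:R + x) / a%:R)).
Proof.
move=> oa oc cop.
have apos : (0 < a)%N by move: oa; case: a {cop}.
have cpos : (0 < c)%N by move: oc; case: c {cop}.
have a0 : (a%:R : R) != 0 by rewrite pnatr_eq0 -lt0n.
have c0 : (c%:R : R) != 0 by rewrite pnatr_eq0 -lt0n.
rewrite (mult_eulerF c n _ oc) -(perm_eulerF a c n _ oa oc cop).
rewrite [a%:R ^+ n * _]mulrC -mulrA; congr (_ * _); rewrite mulr_sumr; apply: eq_bigr => mu _.
rewrite (mult_eulerF a n _ oa) !mulr_sumr; apply: eq_bigr => nu _.
have -> : ((a%:R * z + c%:R * x + a%:R * mu%:R) / c%:R + nu%:R) / a%:R =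
   (mu%:R + z) / c%:R + (nu%:R + x) / a%:R by field; apply/andP.
ring.
Qed.

Lemma combine m1 m2 (K : R) (T1 T2 T3 T4 : 'I_m1 -> 'I_m2 -> R) :
  (forall i j, T1 i j + T2 i j = - 2^-1 * T3 i j + T4 i j) ->
  K * (\sum_i \sum_j T1 i j) + K * (\sum_i \sum_j T2 i j) =
  - 2^-1 * (K * (\sum_i \sum_j T3 i j)) + K * (\sum_i \sum_j T4 i j).
Proof.
move=> h.
have e i : \sum_j T1 i j + \sum_j T2 i j = - 2^-1 * \sum_j T3 i j + \sum_j T4 i j.
  by rewrite -big_split mulr_sumr -big_split; apply: eq_bigr => j _; exact: h.
have E : \sum_i \sum_j T1 i j + \sum_i \sum_j T2 i j =
   - 2^-1 * \sum_i \sum_j T3 i j + \sum_i \sum_j T4 i j.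
  by rewrite -big_split mulr_sumr -big_split; apply: eq_bigr => i _; exact: e.
by rewrite -mulrDr E; ring.
Qed.


Lemma kfold1 (A C S : R) n : A * C ^+ n.+1 * (A ^+ n * S) = A ^+ n.+1 * C ^+ n.+1 * S.
Proof. by rewrite !exprS; ring. Qed.
Lemma kfold2 (A C S : R) n : C * A ^+ n.+1 * (C ^+ n * S) = A ^+ n.+1 * C ^+ n.+1 * S.
Proof. by rewrite !exprS; ring. Qed.

Lemma main a c : (0 < a)%N -> (0 < c)%N -> odd a -> odd c -> coprime a c ->
  forall n (x z : R),
    a%:R * c%:R ^+ n.+1 * S5 n.+1 a c x z + c%:R * a%:R ^+ n.+1 * S5 n.+1 c a z x =
    - 2^-1 * \sum_(1 <= j < n.+2)
                ('C(n, j.-1))%:R * a%:R ^+ (n.+2 - j) * c%:R ^+ j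
                  * eulerF (n.+1 - j) z * eulerF j.-1 x
    + eulerF n.+1 (a%:R * z + c%:R * x).
Proof.
move=> apos cpos oa oc cop n.
pose Phi := fun x z : R =>
  a%:R * c%:R ^+ n.+1 * S5 n.+1 a c x z + c%:R * a%:R ^+ n.+1 * S5 n.+1 c a z x -
    (- 2^-1 * \sum_(1 <= j < n.+2)
                ('C(n, j.-1))%:R * a%:R ^+ (n.+2 - j) * c%:R ^+ j
                  * eulerF (n.+1 - j) z * eulerF j.-1 x
    + eulerF n.+1 (a%:R * z + c%:R * x)).
suff H : forall x z, Phi x z = 0.
  by move=> x z; apply/eqP; rewrite -subr_eq0; apply/eqP; exact: H.
have hx : forall x z, Phi (x + 1) z = - Phi x z.
  move=> x z; rewrite /Phi S5_shift_x S5_shift_z //.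
  have -> : a%:R * z + c%:R * (x + 1) = (a%:R * z + c%:R * x) + c%:R by ring.
  rewrite eulerF_nat -signr_odd oc expr1.
  under eq_bigr => j _ do rewrite eulerF1 mulrN.
  rewrite sumrN; ring.
have hz : forall x z, Phi x (z + 1) = - Phi x z.
  move=> x z; rewrite /Phi S5_shift_z // S5_shift_x.
  have -> : a%:R * (z + 1) + c%:R * x = (a%:R * z + c%:R * x) + a%:R by ring.
  rewrite eulerF_nat -signr_odd oa expr1.
  under eq_bigr => j _ do rewrite eulerF1 mulrN mulNr.
  rewrite sumrN; ring.
have h01 : forall x z, 0 <= x < 1 -> 0 <= z < 1 -> Phi x z = 0.
  move=> x z hx0 hz0; rewrite /Phi.
  rewrite (S5_expand n a c x z oa cpos hz0) (S5_expand n c a z x oc apos hx0).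
  rewrite (RHS_expand n a c x z oa oc hx0 hz0) (Ep_expand (n.+1) a c x z oa oc cop).
  rewrite [X in c%:R * a%:R ^+ n.+1 * (_ * X)]exchange_big /=.
  rewrite kfold1 kfold2; apply/eqP; rewrite subr_eq0; apply/eqP.
  apply: combine => i j.
  have hy := in01 c i z (ltn_ord i) hz0.
  have hv := in01 a j x (ltn_ord j) hx0.
  rewrite [(j%:R + x) / a%:R + _]addrC.
  set y := (i%:R + z) / c%:R; set v := (j%:R + x) / a%:R.
  have ht := termwise n y v hy hv.
  transitivity ((-1) ^+ i * (-1) ^+ j *
    (eulerF n (y + v) * (y - 2^-1) + eulerF n (y + v) * (v - 2^-1))); first by ring.
  rewrite ht; ring.
have H1 : forall z, 0 <= z < 1 -> forall x, Phi x z = 0.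
  move=> z hz0; apply: (zero_ext (fun x => Phi x z)) => [x|x hx0]; [exact: hx| exact: h01].
move=> x z; apply: (zero_ext (fun z => Phi x z)) => [z'|z' hz0]; [exact: hz| exact: H1].
Qed.

End S.

Theorem corollary3 (R : realType) (a c : nat) :
  (0 < a)%N -> (0 < c)%N -> odd a -> odd c -> coprime a c ->
  forall (p : nat), (1 <= p)%N -> forall x z : R,
    a%:R * c%:R ^+ p * S5 p a c x z + c%:R * a%:R ^+ p * S5 p c a z x =
    - 2^-1 * \sum_(1 <= j < p.+1)
                ('C(p.-1, j.-1))%:R * a%:R ^+ (p.+1 - j) * c%:R ^+ j
                  * eulerF (p - j) z * eulerF j.-1 x
    + eulerF p (a%:R * z + c%:R * x).
Proof.
move=> apos cpos oa oc cop [//|n] _ x z.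
exact (@main R a c apos cpos oa oc cop n x z).
Qed.
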